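(* Let $R=\mathrm{Mat}_n(\mathcal O_D,\underline m)$ be a standard monomial order of positive type (i.e. $m_{ij}\ge 0$ for all $i,j$) which is a Bass order. Define $\underline m'=(m'_{ij})$ by $m'_{ij}=1$ if $m_{ij}\ne 0$ and $m'_{ij}=0$ if $m_{ij}=0$. Then $R'=\mathrm{Mat}_n(\mathcal O_D,\underline m')$ is an $\mathcal O$-order (i.e. $\underline m'$ satisfies the order condition) containing $R$, and $R'$ is a Bass order.
   Context: Let $k$ be a non-Archimedean local field with ring of integers $\mathcal O$, let $D$ be a finite-dimensional central division algebra over $k$, $\mathcal O_D$ its valuation ring, $\mathfrak P$ its maximal ideal. For $\underline m=(m_{ij})\in\mathrm{Mat}_n(\mathbb Z)$, $\mathrm{Mat}_n(\mathcal O_D,\underline m)=\{(a_{ij})\in\mathrm{Mat}_n(D): a_{ij}\in\mathfrak P^{m_{ij}}\ \forall i,j\}$; the order condition is $m_{ii}=0$ for all $i$ and $m_{ik}\le m_{ij}+m_{jk}$ for all $i,j,k$, and then this is an $\mathcal O$-order (standard monomial order of level $\underline m$). An $\mathcal O$-order $R$ is Gorenstein if every exact sequence $0\to R\to M\to N\to 0$ of right $R$-lattices splits; $R$ is Bass if every $\mathcal O$-order containing $R$ is Gorenstein. *)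

(* Defs.v *)
From HB Require Import structures.
From mathcomp Require Import all_boot all_order all_algebra all_field.
Set Implicit Arguments. Unset Strict Implicit. Unset Printing Implicit Defensive.
Import Order.TTheory GRing.Theory Num.Theory.
Local Open Scope ring_scope.

(* Discrete valuations (the value at 0 is irrelevant: 0 is treated    *)
(* separately, v 0 = +oo by convention).                               *)

Definition vge {T : zmodType} (v : T -> int) (N : int) (x : T) : bool :=
  (x == 0) || (N <= v x).

Definition is_discrete_valuation {T : nzRingType} (v : T -> int) : Prop :=
  [/\ forall x y : T, x != 0 -> y != 0 -> v (x * y) = v x + v y,
      forall x y : T, x != 0 -> y != 0 -> x + y != 0 ->
                      Num.min (v x) (v y) <= v (x + y)
    & exists pi : T, pi != 0 /\ v pi = 1 ].

Definition nonarch_local_field (k : fieldType) (v : k -> int) : Prop :=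
  [/\ is_discrete_valuation v,
      forall u : nat -> k,
        (forall N : int, exists M : nat, forall p q : nat,
            (M <= p)%N -> (M <= q)%N -> vge v N (u p - u q)) ->
        exists l : k, forall N : int, exists M : nat, forall p : nat,
            (M <= p)%N -> vge v N (u p - l)
    & (* finite residue field O / pi O *)
      exists s : seq k, all (vge v 0) s /\
        forall x : k, vge v 0 x -> exists2 y, y \in s & vge v 1 (x - y) ].

(* D is a central division algebra over k (finite-dimensional, since    *)
(* D is an falgType k), and w is the normalized valuation of D extending *)
(* (up to a positive factor) the valuation v of k.                       *)
Definition central_division_algebra (k : fieldType) (D : falgType k) : Prop :=
  (forall x : D, x != 0 -> x \is a GRing.unit) /\
  (forall z : D, (forall y : D, z * y = y * z) -> exists c : k, z = c%:A).

Definition valuation_of_D (k : fieldType) (v : k -> int) (D : falgType k)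
  (w : D -> int) : Prop :=
  is_discrete_valuation w /\
  exists e : nat, (0 < e)%N /\ forall c : k, c != 0 -> w (c%:A) = (e%:Z * v c)%R.

Section MatD.
Variables (k : fieldType) (v : k -> int) (D : falgType k) (w : D -> int).
Variable n : nat.

Definition mxD := 'M[D]_n.

Definition scalek (c : k) (X : 'M[D]_n) : 'M[D]_n := map_mx (fun d => c *: d) X.

Definition inO (c : k) : bool := vge v 0 c.

Definition inPpow (m : int) (x : D) : bool := vge w m x.

Definition MatOD (m : 'I_n -> 'I_n -> int) : pred 'M[D]_n :=
  fun X => [forall i, forall j, inPpow (m i j) (X i j)].

Definition order_condition (m : 'I_n -> 'I_n -> int) : Prop :=
  (forall i, m i i = 0) /\ (forall i j l, m i l <= m i j + m j l).

Definition positive_type (m : 'I_n -> 'I_n -> int) : Prop :=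
  forall i j, 0 <= m i j.

Definition is_O_order (R : pred 'M[D]_n) : Prop :=
  [/\ (1%:M \in R /\ {in R &, forall x y, x - y \in R}),
      {in R &, forall x y, x *m y \in R},
      (forall c X, inO c -> X \in R -> scalek c X \in R),
      (exists (d : nat) (g : 'I_d -> 'M[D]_n), (forall i, g i \in R) /\
         forall X, X \in R -> exists a : 'I_d -> k,
           (forall i, inO (a i)) /\ X = \sum_(i < d) scalek (a i) (g i))
    & (forall X : 'M[D]_n, exists s : seq (k * 'M[D]_n),
          all (fun p => p.2 \in R) s /\ X = \sum_(p <- s) scalek p.1 p.2) ].

(* Right R-lattices: finitely generated right R-modules which are       *)
(* O-torsion-free.  The action is given on all of Mat_n(D) but only its  *)
(* values on R matter.                                                   *)
Record rlattice (R : pred 'M[D]_n) := RLattice {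
  rl_car :> zmodType;
  rl_act : rl_car -> 'M[D]_n -> rl_car;
  rl_addl : forall r, r \in R -> forall x y, rl_act (x + y) r = rl_act x r + rl_act y r;
  rl_addr : forall x r s, r \in R -> s \in R -> rl_act x (r + s) = rl_act x r + rl_act x s;
  rl_one : forall x, rl_act x 1%:M = x;
  rl_assoc : forall x r s, r \in R -> s \in R -> rl_act (rl_act x r) s = rl_act x (r *m s);
  rl_fingen : exists (d : nat) (g : 'I_d -> rl_car), forall x, exists r : 'I_d -> 'M[D]_n,
      (forall i, r i \in R) /\ x = \sum_(i < d) rl_act (g i) (r i);
  rl_torsionfree : forall (c : k) x, inO c -> c != 0 ->
      rl_act x (scalek c 1%:M) = 0 -> x = 0
}.

Definition rhom (R : pred 'M[D]_n) (M N : rlattice R) (f : M -> N) : Prop :=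
  (forall x y, f (x + y) = f x + f y) /\
  (forall x r, r \in R -> f (rl_act x r) = rl_act (f x) r).

Definition rhom_from_reg (R : pred 'M[D]_n) (M : rlattice R) (f : 'M[D]_n -> M) : Prop :=
  {in R &, forall x y, f (x + y) = f x + f y} /\
  {in R &, forall x r, f (x *m r) = rl_act (f x) r}.

Definition rhom_to_reg (R : pred 'M[D]_n) (M : rlattice R) (h : M -> 'M[D]_n) : Prop :=
  [/\ forall x, h x \in R,
      forall x y, h (x + y) = h x + h y
    & forall x r, r \in R -> h (rl_act x r) = h x *m r].

Definition Gorenstein (R : pred 'M[D]_n) : Prop :=
  forall (M N : rlattice R) (f : 'M[D]_n -> M) (g : M -> N),
    rhom_from_reg f -> rhom g ->
    {in R &, injective f} ->
    (forall y : N, exists x : M, g x = y) ->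
    (forall x : M, g x = 0 <-> exists2 y, y \in R & f y = x) ->
    exists h : M -> 'M[D]_n, rhom_to_reg h /\ {in R, forall y, h (f y) = y}.

Definition Bass (R : pred 'M[D]_n) : Prop :=
  is_O_order R /\
  forall S : pred 'M[D]_n, is_O_order S -> {subset R <= S} -> Gorenstein S.

Definition mprime (m : 'I_n -> 'I_n -> int) : 'I_n -> 'I_n -> int :=
  fun i j => if m i j == 0 then 0 else 1.

End MatD.

(* Main.v *)
Require Import Defs.
From HB Require Import structures.
From mathcomp Require Import all_boot all_order all_algebra all_field.
From mathcomp Require Import zify.
From Stdlib Require Classical_Prop.
Import Order.TTheory GRing.Theory Num.Theory.
Local Open Scope ring_scope.
Set Implicit Arguments. Unset Strict Implicit. Unset Printing Implicit Defensive.

Section Val.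
Variables (T : nzRingType) (v : T -> int) (Hv : is_discrete_valuation v).

Lemma val1 : v 1 = 0.
Proof. case: Hv => Hm _ _. have := Hm 1 1 (oner_neq0 T) (oner_neq0 T).
rewrite mulr1. lia. Qed.

Lemma valN1 : v (-1) = 0.
Proof. case: Hv => Hm _ _.
have h : (-1 : T) != 0 by rewrite oppr_eq0 oner_neq0.
have := Hm (-1) (-1) h h. rewrite mulrNN mulr1 val1. lia. Qed.

Lemma valN x : x != 0 -> v (- x) = v x.
Proof. move=> x0; case: Hv => Hm _ _.
have h : (-1 : T) != 0 by rewrite oppr_eq0 oner_neq0.
by rewrite -mulN1r Hm // valN1 add0r. Qed.

Lemma vge0 N : vge v N 0.
Proof. by rewrite /vge eqxx. Qed.

Lemma vgeD N x y : vge v N x -> vge v N y -> vge v N (x + y).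
Proof.
rewrite /vge; case: eqP => [->|/eqP x0] /=; first by rewrite add0r.
case: eqP => [->|/eqP y0] /=; first by rewrite addr0 (negbTE x0).
move=> hx hy; case xy0: (x + y == 0) => //=.
case: Hv => _ Ha _; apply: le_trans (Ha x y x0 y0 (negbT xy0)).
by rewrite le_min hx hy.
Qed.

Lemma vgeN N x : vge v N x -> vge v N (- x).
Proof. rewrite /vge oppr_eq0; case: eqP => //= /eqP x0. by rewrite valN. Qed.

Lemma vgeB N x y : vge v N x -> vge v N y -> vge v N (x - y).
Proof. by move=> hx hy; apply: vgeD => //; apply: vgeN. Qed.

Lemma vgeM N M x y : vge v N x -> vge v M y -> vge v (N + M) (x * y).
Proof.
rewrite /vge; case: eqP => [->|/eqP x0] /=; first by rewrite mul0r eqxx.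
case: eqP => [->|/eqP y0] /=; first by rewrite mulr0 eqxx.
move=> hx hy; case xy0: (x * y == 0) => //=.
case: Hv => Hm _ _; rewrite Hm //; exact: lerD.
Qed.

Lemma vge_le N N' x : N <= N' -> vge v N' x -> vge v N x.
Proof. rewrite /vge => h; case: (x == 0) => //= h'; exact: le_trans h'. Qed.

Lemma vge_sum N (I : Type) (r : seq I) (P : pred I) (F : I -> T) :
  (forall i, vge v N (F i)) -> vge v N (\sum_(i <- r | P i) F i).
Proof. move=> H; elim/big_ind: _ => //; [exact: vge0 | exact: vgeD]. Qed.

End Val.

Section ValK.
Variables (k : fieldType) (v : k -> int) (Hv : is_discrete_valuation v).

Lemma valdiv a b : a != 0 -> b != 0 -> v (a / b) = v a - v b.
Proof.
move=> a0 b0; case: Hv => Hm _ _.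
have ab0 : a / b != 0 by rewrite mulf_neq0 // invr_neq0.
have := Hm _ _ ab0 b0; rewrite divfK //. lia.
Qed.

Lemma valX p N : p != 0 -> v (p ^+ N) = N%:Z * v p.
Proof.
move=> p0; case: Hv => Hm _ _; elim: N => [|N IH]; first by rewrite expr0 val1 // mul0r.
rewrite exprS Hm ?expf_neq0 // IH. lia.
Qed.

Lemma exists_minv (P : k -> Prop) : (forall a, P a -> 0 <= v a) ->
  (exists a, P a) -> exists a0, P a0 /\ forall a, P a -> v a0 <= v a.
Proof.
move=> Hpos [a Pa].
have H : forall N : nat, forall b, P b -> v b <= N%:Z ->
    exists a0, P a0 /\ forall c, P c -> v a0 <= v c.
  elim=> [|N IH] b Pb hb.
    exists b; split=> // c Pc; have := Hpos c Pc; have := Hpos b Pb; lia.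
  case: (Classical_Prop.classic (exists c, P c /\ v c < v b)) => [[c [Pc hc]]|H].
    apply: (IH c Pc); lia.
  exists b; split=> // c Pc; rewrite leNgt; apply/negP => hc; apply: H; by exists c.
apply: (H (absz (v a)) a Pa). have := Hpos a Pa. lia.
Qed.

End ValK.

Section Mx.
Variables (k : fieldType) (v : k -> int) (Hv : is_discrete_valuation v).
Variables (D : falgType k) (n : nat).
Local Notation V := 'M[D]_n.

Lemma scalekE c (X : V) i j : scalek c X i j = c *: X i j.
Proof. by rewrite /scalek mxE. Qed.

Lemma scalekD c (X Y : V) : scalek c (X + Y) = scalek c X + scalek c Y.
Proof. by apply/matrixP => i j; rewrite !mxE scalerDr. Qed.

Lemma scalek0 c : scalek c (0 : V) = 0.
Proof. by apply/matrixP => i j; rewrite !mxE scaler0. Qed.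

Lemma scale0k (X : V) : scalek 0 X = 0.
Proof. by apply/matrixP => i j; rewrite !mxE scale0r. Qed.

Lemma scale1k (X : V) : scalek 1 X = X.
Proof. by apply/matrixP => i j; rewrite !mxE scale1r. Qed.

Lemma scalekA a b (X : V) : scalek a (scalek b X) = scalek (a * b) X.
Proof. by apply/matrixP => i j; rewrite !mxE scalerA. Qed.

Lemma scalekBl a b (X : V) : scalek (a - b) X = scalek a X - scalek b X.
Proof. by apply/matrixP => i j; rewrite !mxE scalerBl. Qed.

Lemma scalek_sum c (I : Type) (r : seq I) (P : pred I) (F : I -> V) :
  scalek c (\sum_(i <- r | P i) F i) = \sum_(i <- r | P i) scalek c (F i).
Proof. exact: (big_morph _ (scalekD c) (scalek0 c)). Qed.

Definition inspan d (g : 'I_d -> V) (x : V) : Prop :=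
  exists a : 'I_d -> k, (forall i, inO v (a i)) /\ x = \sum_(i < d) scalek (a i) (g i).

Definition submod (M : V -> Prop) : Prop :=
  [/\ M 0, (forall x y, M x -> M y -> M (x - y))
    & (forall c x, inO v c -> M x -> M (scalek c x))].

Lemma inspan_submod d (g : 'I_d -> V) : submod (inspan g).
Proof.
split.
- exists (fun=> 0); split; first by move=> _; exact: vge0.
  by rewrite big1 // => i _; rewrite scale0k.
- move=> x y [a [Ha ->]] [b [Hb ->]]; exists (fun i => a i - b i); split.
    by move=> i; exact: (vgeB Hv (Ha i) (Hb i)).
  by rewrite -sumrB; apply: eq_bigr => i _; rewrite scalekBl.
- move=> c x Hc [a [Ha ->]]; exists (fun i => c * a i); split.
    by move=> i; have := vgeM Hv Hc (Ha i); rewrite addr0.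
  by rewrite scalek_sum; apply: eq_bigr => i _; rewrite scalekA.
Qed.

Lemma sub_fg d : forall (g : 'I_d -> V) (M : V -> Prop), submod M ->
  (forall x, M x -> inspan g x) ->
  exists d' (g' : 'I_d' -> V), (forall i, M (g' i)) /\ forall x, M x -> inspan g' x.
Proof.
elim: d => [|d IH] g M HM HMg.
  by exists 0%N, g; split => //; case.
set h := g ord0; set g1 := fun i : 'I_d => g (lift ord0 i).
have dec : forall x, M x -> exists a y, [/\ inO v a, inspan g1 y & x = scalek a h + y].
  move=> x /HMg [a [Ha ->]]; exists (a ord0), (\sum_(i < d) scalek (a (lift ord0 i)) (g1 i)).
  split => //; last by rewrite big_ord_recl.
  by exists (fun i => a (lift ord0 i)).
have [M0 MB MS] := HM.
have [S0 SB SS] := inspan_submod g1.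
pose M' x := M x /\ inspan g1 x.
have HM' : submod M'.
  split; first by [].
  - by move=> x y [? ?] [? ?]; split; [apply: MB | apply: SB].
  - by move=> c x Hc [? ?]; split; [apply: MS | apply: SS].
have [d' [g' [Hg' Hsp]]] := IH g1 M' HM' (fun x Hx => Hx.2).
pose J a := inO v a /\ exists y, inspan g1 y /\ M (scalek a h + y).
case: (Classical_Prop.classic (exists a, a != 0 /\ J a)) => [Jnz|Jz]; last first.
  apply: (IH g1 M HM) => x Mx.
  have [a [y [Ha sy ex]]] := dec x Mx.
  case: (eqVneq a 0) => [a0|anz].
    by move: ex; rewrite a0 scale0k add0r => ->.
  exfalso; apply: Jz; exists a; split => //; split => //; exists y; split => //.
  by rewrite -ex.
have [a0 [[a0nz [Oa0 [y0 [sy0 Mz]]]] amin]] :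
    exists a0, (a0 != 0 /\ J a0) /\ forall a, (a != 0 /\ J a) -> v a0 <= v a.
  apply: exists_minv => // a [anz [Ha _]].
  by move: Ha; rewrite /inO /vge (negbTE anz).
set z := scalek a0 h + y0.
exists d'.+1, (fun i => if unlift ord0 i is Some j then g' j else z).
split.
  by move=> i; case: unliftP => [j|] _ /=; [exact: (Hg' j).1 | exact: Mz].
move=> x Mx.
have [a [y [Ha sy ex]]] := dec x Mx.
case: (eqVneq a 0) => [az|anz].
  have My : M' y by move: Mx; rewrite ex az scale0k add0r.
  have [b [Hb ey]] := Hsp y My.
  exists (fun i => if unlift ord0 i is Some j then b j else 0); split.
    by move=> i; case: unliftP => [j|] _ /=; [exact: Hb | exact: vge0].
  rewrite big_ord_recl unlift_none scale0k add0r ex az scale0k add0r ey.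
  by apply: eq_bigr => i _; rewrite liftK.
have Ja : J a by split => //; exists y; split => //; rewrite -ex.
have le0 := amin a (conj anz Ja).
set b := a / a0.
have Ob : inO v b.
  by rewrite /inO /vge /b valdiv //; apply/orP; right; lia.
have ex2 : x - scalek b z = y - scalek b y0.
  rewrite ex /z scalekD scalekA /b divfK // opprD addrACA subrr add0r //.
have M'x : M' (x - scalek b z).
  split; first by apply: MB => //; apply: MS.
  by rewrite ex2; apply: SB => //; apply: SS.
have [c [Hc ec]] := Hsp _ M'x.
exists (fun i => if unlift ord0 i is Some j then c j else b); split.
  by move=> i; case: unliftP => [j|] _ /=; [exact: Hc | exact: Ob].
rewrite big_ord_recl unlift_none.
have -> : \sum_(i < d') scalek (if unlift ord0 (lift ord0 i) is Some j then c j else b)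
      (if unlift ord0 (lift ord0 i) is Some j then g' j else z) =
    \sum_(i < d') scalek (c i) (g' i) by apply: eq_bigr => i _; rewrite liftK.
by rewrite -ec addrC subrK.
Qed.

End Mx.

Lemma inMatODP (k : fieldType) (D : falgType k) (w : D -> int) (n : nat)
  (m : 'I_n -> 'I_n -> int) (X : 'M[D]_n) :
  reflect (forall i j, inPpow w (m i j) (X i j)) (X \in MatOD w m).
Proof.
apply: (iffP forallP) => [H i j | H i]; first exact: (forallP (H i) j).
by apply/forallP => j; exact: H.
Qed.

Theorem lemma5p2 (k : fieldType) (v : k -> int) (Hk : nonarch_local_field v)
  (D : falgType k) (HD : central_division_algebra D) (w : D -> int)
  (Hw : valuation_of_D v w) (n : nat) (m : 'I_n -> 'I_n -> int) :
  order_condition m -> positive_type m ->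
  Bass v (MatOD w m) ->
  [/\ order_condition (mprime m),
      is_O_order v (MatOD w (mprime m)),
      {subset MatOD w m <= MatOD w (mprime m)}
    & Bass v (MatOD w (mprime m))].
Proof.
move=> [Hm0 Htri] Hpos [HR HS].
have [Hv _ _] := Hk.
have [Hwd [e [e0 He]]] := Hw.
have [_ _ [pi [pinz vpi]]] := Hv.
set m' := mprime m.
have Hoc : order_condition m'.
  split=> [i|i j l]; first by rewrite /m' /mprime Hm0 eqxx.
  have := Htri i j l; have := Hpos i j; have := Hpos j l; have := Hpos i l.
  rewrite /m' /mprime.
  case: eqP => h1 /=; case: eqP => h2 /=; case: eqP => h3 /=; lia.
have m'le : forall i j, 0 <= m' i j <= m i j.
  move=> i j; have := Hpos i j; rewrite /m' /mprime; case: eqP => h /=; lia.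
have Hsub : {subset MatOD w m <= MatOD w m'}.
  move=> X /inMatODP HX; apply/inMatODP => i j.
  by apply: vge_le (HX i j); have /andP[] := m'le i j.
have vgeZ : forall N c (x : D), inO v c -> vge w N x -> vge w N (c *: x).
  move=> N c x Hc Hx; case: (eqVneq c 0) => [->|cnz]; first by rewrite scale0r; exact: vge0.
  rewrite -mulr_algl.
  have hc : vge w (e%:Z * v c) (c%:A) by rewrite /vge He // lexx orbT.
  apply: vge_le (vgeM Hwd hc Hx).
  move: Hc; rewrite /inO /vge (negbTE cnz) /= => Hc. nia.
have [[R1 RB] RM RS [d [g [Hg Hspan]]] Hfull] := HR.
have RB' : {in MatOD w m' &, forall x y, x - y \in MatOD w m'}.
  move=> X Y /inMatODP HX /inMatODP HY; apply/inMatODP => i j.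
  by rewrite !mxE; exact: (vgeB Hwd (HX i j) (HY i j)).
have RS' : forall c X, inO v c -> X \in MatOD w m' -> scalek c X \in MatOD w m'.
  move=> c X Hc /inMatODP HX; apply/inMatODP => i j.
  by rewrite scalekE; exact: (vgeZ _ _ _ Hc (HX i j)).
have HOR' : is_O_order v (MatOD w m').
  split.
  - by split; [apply: Hsub | exact: RB'].
  - move=> X Y /inMatODP HX /inMatODP HY; apply/inMatODP => i l.
    rewrite mxE; apply: (vge_sum Hwd) => j.
    apply: vge_le (vgeM Hwd (HX i j) (HY j l)).
    by have [_ ] := Hoc; apply.
  - exact: RS'.
  - have [N HN] : exists N : nat, forall i j, m i j <= N%:Z.
      exists (\max_(ij : 'I_n * 'I_n) absz (m ij.1 ij.2))%N => i j.
      have := @leq_bigmax _ (fun ij : 'I_n * 'I_n => absz (m ij.1 ij.2)) (i, j).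
      rewrite /=. lia.
    set c := pi ^+ N.
    have cnz : c != 0 by rewrite expf_neq0.
    have vc : v c = N%:Z by rewrite /c valX // vpi mulr1.
    have sub_sp : forall X, X \in MatOD w m' ->
        inspan v (fun i => scalek c^-1 (g i)) X.
      move=> X HX.
      have HcX : scalek c X \in MatOD w m.
        apply/inMatODP => i j; move/inMatODP: HX => HX.
        rewrite scalekE -mulr_algl.
        have hc : vge w (e%:Z * N%:Z) (c%:A) by rewrite /vge He // vc lexx orbT.
        apply: vge_le (vgeM Hwd hc (HX i j)).
        have := HN i j; have /andP[] := m'le i j. nia.
      have [a [Ha ea]] := Hspan _ HcX.
      exists a; split => //.
      rewrite -[X]scale1k -(mulVf cnz) -scalekA ea scalek_sum.
      by apply: eq_bigr => i _; rewrite !scalekA mulrC.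
    have HM : submod v (fun X => X \in MatOD w m').
      split.
      + by apply/inMatODP => i j; rewrite mxE; exact: vge0.
      + by move=> x y hx hy; apply: RB'.
      + by move=> c0 x hc hx; apply: RS'.
    have [d' [g' [Hg' Hsp]]] := sub_fg Hv HM sub_sp.
    by exists d', g'.
  - move=> X; have [s [Hs ->]] := Hfull X; exists s; split => //.
    by apply/allP => p /(allP Hs) /Hsub.
split => //.
split => // S HSo HsubS; apply: HS => // X /Hsub; exact: HsubS.
Qed.
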